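(* As $N\to\infty$, $$\mathbf{P}_o\Big[\Big\{\tfrac{Sn}{N^d}<(\sqrt{\log\log n})^{-1}\Big\}\cup\Big\{\tfrac{Sn}{N^d}>\log N\Big\}\Big]\to0.$$
   Context: $d\ge3$. $(Y_t)$ is the lazy simple random walk on $\mathbb{Z}^d$ (stays put with probability $1/2$, otherwise moves to each neighbour with probability $1/(4d)$), $\mathbf{P}_o$ its law started at the origin. $L=mN$ with $m=m(N)$, $N$ integers, $L^2/N^d\to A\in(0,\infty)$ as $N\to\infty$. $n=\lfloor N^\delta\rfloor$ for a fixed $2<\delta<d$. $S=\inf\{\ell\ge0:Y_{n\ell}\notin(-L,L)^d\}$. *)

(* Defs.v *)
From HB Require Import structures.
From mathcomp Require Import all_boot all_order all_algebra.
From mathcomp Require Import all_classical all_reals all_analysis.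
Set Implicit Arguments. Unset Strict Implicit. Unset Printing Implicit Defensive.
Import Order.TTheory GRing.Theory Num.Theory.
Local Open Scope ring_scope.

(* One step of the lazy simple random walk on Z^d:
   None = stay put; Some (i, b) = move by +e_i (b = true) or -e_i (b = false). *)
Definition step (d : nat) := option ('I_d * bool).

Definition move (d : nat) (s : step d) : 'rV[int]_d :=
  match s with
  | None => 0
  | Some (i, b) => if b then delta_mx 0 i else - delta_mx 0 i
  end.

Definition stepw (R : realType) (d : nat) (s : step d) : R :=
  if s is None then 2^-1 else ((4 * d)%:R)^-1.

Definition walk_pos (d T : nat) (s : {ffun 'I_T -> step d}) (t : nat) : 'rV[int]_d :=
  \sum_(k < T | (k < t)%N) move (s k).

(* P_o of an event depending only on the first T steps of the walk:
   the law of (Y_0, ..., Y_T) is the product of the step weights. *)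
Definition walk_prob (R : realType) (d T : nat)
    (E : pred {ffun 'I_T -> step d}) : R :=
  \sum_(s : {ffun 'I_T -> step d}) (\prod_(k < T) stepw R (s k)) * (E s)%:R.

Definition in_box (d L : nat) (y : 'rV[int]_d) : bool :=
  [forall i : 'I_d, (- (L%:Z) < y 0 i) && (y 0 i < L%:Z)].

(* S = inf {l >= 0 : Y_{n l} notin (-L,L)^d}, computed from the first n*K steps;
   value K.+1 means S > K. *)
Definition exit_time (d n K L : nat) (s : {ffun 'I_(n * K.+1) -> step d}) : nat :=
  find (fun l => ~~ in_box L (walk_pos s (n * l))) (iota 0 K.+1).

Definition nN (R : realType) (delta : R) (N : nat) : nat := Num.truncn ((N%:R : R) `^ delta).

(* horizon K (in units of n), large enough that both events are determined *)
Definition horizon (R : realType) (d : nat) (delta : R) (N : nat) : nat :=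
  let n := nN delta N in
  (Num.truncn ((N%:R : R) ^+ d * (ln (N%:R : R) + (Num.sqrt (ln (ln (n%:R : R))))^-1)
               / n%:R)).+1.

Definition main_prob (R : realType) (d : nat) (delta : R) (m : nat -> nat) (N : nat) : R :=
  let n := nN delta N in
  let K := horizon d delta N in
  let L := (m N * N)%N in
  walk_prob R
    (fun s : {ffun 'I_(n * K.+1) -> step d} =>
       let x := ((@exit_time d n K L s * n)%:R : R) / (N%:R : R) ^+ d in
       (x < (Num.sqrt (ln (ln (n%:R : R))))^-1) || (ln (N%:R : R) < x)).

(* Main.v *)
Require Import Defs.
From HB Require Import structures.
From mathcomp Require Import all_boot all_order all_algebra.
From mathcomp Require Import all_classical all_reals all_analysis.
From mathcomp Require Import ring lra.
Import Order.TTheory GRing.Theory Num.Theory.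
Import numFieldNormedType.Exports.
Set Implicit Arguments. Unset Strict Implicit. Unset Printing Implicit Defensive.
Local Open Scope ring_scope.

Lemma big_option_sum (R : realType) (T : finType) (F : option T -> R) :
  \sum_(x : option T) F x = F None + \sum_(y : T) F (Some y).
Proof.
rewrite (bigD1 None) //=; congr (_ + _).
rewrite (reindex_omap (@Some T) id); last by case.
rewrite [RHS](eq_bigl (fun j => (Some j != None) && (Some j == Some j))) //.
by move=> j /=; rewrite eqxx.
Qed.

Fixpoint Ex (R : realType) (d : nat) (T : nat) (f : seq (step d) -> R) : R :=
  match T with
  | 0 => f [::]
  | T'.+1 => \sum_(x : step d) stepw R x * Ex T' (fun l => f (x :: l))
  end.

Lemma stepw_ge0 (R : realType) d (x : step d) : 0 <= stepw R x.
Proof. by case: x => [?|] /=; rewrite invr_ge0 // ler0n. Qed.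

Lemma big_step (R : realType) d (F : step d -> R) :
  \sum_(x : step d) F x = F None + \sum_(i : 'I_d) (F (Some (i, true)) + F (Some (i, false))).
Proof.
rewrite big_option_sum; congr (_ + _).
rewrite (eq_bigr (fun p => F (Some (p.1, p.2)))); last by case.
rewrite -(pair_bigA _ (fun i b => F (Some (i, b)))) /=.
under eq_bigr => i _ do rewrite big_bool.
by [].
Qed.

Lemma sum_stepw (R : realType) d : (0 < d)%N -> \sum_(x : step d) stepw R x = 1.
Proof.
move=> d0; rewrite big_step /= sumr_const card_ord -mulr_natr natrM.
have hd : (d%:R : R) != 0 by rewrite pnatr_eq0 -lt0n.
by field.
Qed.

Lemma Ex_ext (R : realType) d T (f g : seq (step d) -> R) :
  (forall l, size l = T -> f l = g l) -> Ex T f = Ex T g.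
Proof.
elim: T f g => [|T IH] f g h /=; first exact: h.
apply: eq_bigr => x _; congr (_ * _); apply: IH => l hl; apply: h => /=; by rewrite hl.
Qed.

Lemma Ex_le (R : realType) d T (f g : seq (step d) -> R) :
  (forall l, size l = T -> f l <= g l) -> Ex T f <= Ex T g.
Proof.
elim: T f g => [|T IH] f g h /=; first exact: h.
apply: ler_sum => x _; apply: ler_wpM2l; first exact: stepw_ge0.
apply: IH => l hl; apply: h => /=; by rewrite hl.
Qed.

Lemma ExD (R : realType) d T (f g : seq (step d) -> R) :
  Ex T (fun l => f l + g l) = Ex T f + Ex T g.
Proof.
elim: T f g => [|T IH] f g //=.
rewrite -big_split /=; apply: eq_bigr => x _; by rewrite IH mulrDr.
Qed.

Lemma ExZ (R : realType) d T (c : R) (f : seq (step d) -> R) :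
  Ex T (fun l => c * f l) = c * Ex T f.
Proof.
elim: T f => [|T IH] f //=.
rewrite mulr_sumr; apply: eq_bigr => x _; by rewrite IH mulrCA.
Qed.

Lemma Ex_cst (R : realType) d T (c : R) : (0 < d)%N -> Ex T (fun _ : seq (step d) => c) = c.
Proof.
move=> d0; elim: T => [|T IH] //=.
under eq_bigr => x _ do rewrite IH.
by rewrite -mulr_suml sum_stepw // mul1r.
Qed.

Lemma Ex_cat (R : realType) d a b (f : seq (step d) -> R) :
  Ex (a + b) f = Ex a (fun l1 => Ex b (fun l2 => f (l1 ++ l2))).
Proof.
elim: a f => [|a IH] f //=.
by apply: eq_bigr => x _; rewrite IH.
Qed.

Lemma Ex_marg (R : realType) d T T0 (f : seq (step d) -> R) g :
  (0 < d)%N -> (T0 <= T)%N -> (forall l, size l = T -> f l = g (take T0 l)) ->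
  Ex T f = Ex T0 g.
Proof.
move=> d0 hT h; rewrite -(subnKC hT) Ex_cat; apply: Ex_ext => l1 hl1.
rewrite -[RHS](@Ex_cst R d (T - T0) _ d0); apply: Ex_ext => l2 hl2.
by rewrite h ?size_cat ?hl1 ?hl2 ?subnKC // take_size_cat.
Qed.

Lemma Ex_last (R : realType) d T (f : seq (step d) -> R) :
  Ex T.+1 f = Ex T (fun l => \sum_(x : step d) stepw R x * f (rcons l x)).
Proof.
rewrite -addn1 Ex_cat; apply: Ex_ext => l _ /=.
by apply: eq_bigr => x _; rewrite cats1.
Qed.

Definition lf d T (l : seq (step d)) : {ffun 'I_T -> step d} := [ffun k : 'I_T => nth None l k].

Definition consf d T (x : step d) (f : {ffun 'I_T -> step d}) : {ffun 'I_T.+1 -> step d} :=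
  [ffun i => if unlift ord0 i is Some j then f j else x].

Lemma walk_sum (R : realType) d T (F : {ffun 'I_T -> step d} -> R) :
  \sum_(s : {ffun 'I_T -> step d}) (\prod_(k < T) stepw R (s k)) * F s
  = Ex T (fun l => F (lf T l)).
Proof.
elim: T F => [|T IH] F /=.
  rewrite (big_pred1 (lf 0 [::])) ?big_ord0 ?mul1r // => s /=.
  by symmetry; apply/eqP/ffunP => -[].
rewrite (reindex (fun p : step d * {ffun 'I_T -> step d} => consf p.1 p.2)) /=; last first.
  apply: onW_bij; exists (fun s : {ffun 'I_T.+1 -> step d} => (s ord0, [ffun j => s (lift ord0 j)])).
    move=> [x f] /=; congr (_, _); first by rewrite ffunE unlift_none.
    by apply/ffunP => j; rewrite !ffunE liftK.
  move=> s; apply/ffunP => i; rewrite ffunE /=.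
  by case: unliftP => [j ->|->]; rewrite ?ffunE.
rewrite -(pair_bigA _ (fun x f => (\prod_(k < T.+1) stepw R (consf x f k)) * F (consf x f))) /=.
apply: eq_bigr => x _.
under eq_bigr => f _ do rewrite big_ord_recl ffunE unlift_none.
under eq_bigr => f _ do under eq_bigr => k _ do rewrite ffunE liftK.
under eq_bigr => f _ do rewrite -mulrA.
rewrite -mulr_sumr IH; congr (_ * _); apply: Ex_ext => l _; congr (F _).
apply/ffunP => i; rewrite !ffunE; case: unliftP => [j ->|->] //=.
by rewrite ffunE.
Qed.

Lemma walk_prob_Ex (R : realType) d T (E : pred {ffun 'I_T -> step d}) :
  walk_prob R E = Ex T (fun l => (E (lf T l))%:R).
Proof. exact: walk_sum. Qed.

Definition cd (R : realType) d (i : 'I_d) (x : step d) : R := ((move x) 0 i)%:~R.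

Definition pr (R : realType) d (i : 'I_d) (l : seq (step d)) (t : nat) : R :=
  \sum_(x <- take t l) cd R i x.

Lemma pr_sum (R : realType) d (i : 'I_d) T (l : seq (step d)) t : size l = T ->
  \sum_(k < T | (k < t)%N) cd R i (nth None l k) = pr R i l t.
Proof.
move=> hl; rewrite /pr (big_nth None) size_take -(big_mkord (fun k => k < t)%N (fun k => cd R i (nth None l k))) hl.
case: ltnP => htT.
  symmetry; rewrite (big_nat_widen 0 t T) ?(ltnW htT) //.
  apply: eq_big => // k /= hk; by rewrite nth_take.
rewrite big_nat_cond [RHS]big_nat_cond; apply: eq_big => k.
  by apply/idP/idP => /andP[/andP[h1 h2] h3]; rewrite ?h1 ?h2 ?(leq_trans h2 htT).
move=> /andP[/andP[h1 h2] h3]; by rewrite nth_take.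
Qed.

Lemma walk_pos_pr (R : realType) d T (l : seq (step d)) t (i : 'I_d) : size l = T ->
  ((walk_pos (lf T l) t) 0 i)%:~R = pr R i l t.
Proof.
move=> hl; rewrite /walk_pos summxE rmorph_sum -(@pr_sum R d i T l t hl).
by apply: eq_bigr => k _; rewrite ffunE.
Qed.

Lemma in_box_pr (R : realType) d T (l : seq (step d)) t L : size l = T ->
  in_box L (walk_pos (lf T l) t) =
  [forall i : 'I_d, (- (L%:R : R) < pr R i l t) && (pr R i l t < L%:R)].
Proof.
move=> hl; apply: eq_forallb => i.
rewrite -(@walk_pos_pr R d T l t i hl).
have -> : (L%:R : R) = (L%:Z)%:~R by [].
by rewrite -intrN !ltr_int.
Qed.

Lemma cd_None (R : realType) d (i : 'I_d) : cd R i None = 0.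
Proof. by rewrite /cd /= mxE. Qed.

Lemma cd_Some (R : realType) d (i j : 'I_d) b :
  cd R i (Some (j, b)) = if j == i then (if b then 1 else -1) else 0.
Proof.
rewrite /cd /=; case: b; rewrite ?mxE /= eq_sym; case: eqP => _ //=.
Qed.

Lemma cd3 (R : realType) d (i : 'I_d) x : cd R i x ^+ 3 = cd R i x.
Proof.
case: x => [[j b]|]; rewrite ?cd_None ?cd_Some; last by rewrite expr0n.
case: eqP => _; case: b; rewrite ?expr0n //= ?expr1n //.
by rewrite exprS sqrrN expr1n mulr1.
Qed.

Lemma sum_cd (R : realType) d (i : 'I_d) :
  \sum_(x : step d) stepw R x * cd R i x = 0.
Proof.
rewrite big_step cd_None mulr0 add0r big1 // => j _.
by rewrite !cd_Some /=; case: eqP => _; rewrite ?mulr0 ?addr0 ?mulrN ?mulr1 ?subrr.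
Qed.

Lemma sum_cd2 (R : realType) d (i : 'I_d) :
  \sum_(x : step d) stepw R x * cd R i x ^+ 2 = ((2 * d)%:R)^-1.
Proof.
rewrite big_step cd_None expr0n mulr0 add0r.
rewrite (eq_bigr (fun j => if j == i then ((2 * d)%:R)^-1 else 0)).
  by rewrite -big_mkcond big_pred1_eq.
move=> j _; rewrite !cd_Some /=; case: eqP => _; last by rewrite expr0n mulr0 addr0.
rewrite sqrrN expr1n !mulr1 -mulr2n -mulr_natr natrM.
have d0 : (d%:R : R) != 0 by rewrite pnatr_eq0 -lt0n (leq_ltn_trans (leq0n i) (ltn_ord i)).
by field.
Qed.

Lemma pr_catl (R : realType) d (i : 'I_d) l1 l2 t : (t <= size l1)%N ->
  pr R i (l1 ++ l2) t = pr R i l1 t.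
Proof.
move=> ht; rewrite /pr take_cat; case: ltnP => h //.
have -> : t = size l1 by apply/eqP; rewrite eqn_leq ht h.
by rewrite subnn take0 cats0 take_size.
Qed.

Lemma pr_catr (R : realType) d (i : 'I_d) l1 l2 u :
  pr R i (l1 ++ l2) (size l1 + u) = pr R i l1 (size l1) + pr R i l2 u.
Proof.
rewrite /pr take_cat ltnNge leq_addr /= addKn big_cat take_size //.
Qed.

Lemma pr_rcons (R : realType) d (i : 'I_d) l x :
  pr R i (rcons l x) (size l).+1 = pr R i l (size l) + cd R i x.
Proof.
by rewrite -cats1 -addn1 pr_catr /pr /= big_cons big_nil addr0.
Qed.

Lemma pr_rcons_le (R : realType) d (i : 'I_d) l x t : (t <= size l)%N ->
  pr R i (rcons l x) t = pr R i l t.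
Proof. by move=> h; rewrite -cats1 pr_catl. Qed.

Lemma pr0 (R : realType) d (i : 'I_d) l : pr R i l 0 = 0.
Proof. by rewrite /pr take0 big_nil. Qed.

Lemma step_sq1 (R : realType) d (i : 'I_d) (y : R) : (0 < d)%N ->
  \sum_(x : step d) stepw R x * (y + cd R i x) ^+ 2 = y ^+ 2 + ((2 * d)%:R)^-1.
Proof.
move=> d0.
rewrite (eq_bigr (fun x => y ^+ 2 * stepw R x + 2 * y * (stepw R x * cd R i x)
   + stepw R x * cd R i x ^+ 2)); last by move=> x _; ring.
rewrite !big_split /= -!mulr_sumr sum_stepw // sum_cd sum_cd2.
by rewrite mulr1 mulr0 addr0.
Qed.

Lemma step_sq (R : realType) d (y : 'I_d -> R) : (0 < d)%N ->
  \sum_(x : step d) stepw R x * (\sum_(i : 'I_d) (y i + cd R i x) ^+ 2)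
  = \sum_(i : 'I_d) y i ^+ 2 + 2^-1.
Proof.
move=> d0.
under eq_bigr => x _ do rewrite mulr_sumr.
rewrite exchange_big /=.
under eq_bigr => i _ do rewrite step_sq1 //.
rewrite big_split /= sumr_const card_ord; congr (_ + _).
rewrite -mulr_natr natrM.
have hd : (d%:R : R) != 0 by rewrite pnatr_eq0 -lt0n.
by field.
Qed.

Definition inside (R : realType) d (Lr : R) (l : seq (step d)) (t : nat) : bool :=
  [forall i : 'I_d, (- Lr < pr R i l t) && (pr R i l t < Lr)].

Definition qq (R : realType) d (l : seq (step d)) (t : nat) : R :=
  \sum_(i : 'I_d) pr R i l t ^+ 2.

Definition GG (R : realType) d (Lr : R) (T : nat) (l : seq (step d)) : R :=
  if has (fun t => ~~ inside Lr l t) (iota 0 T) then Lr ^+ 2 else qq R l T.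

Lemma qq_ge0 (R : realType) d (l : seq (step d)) t : 0 <= qq R l t.
Proof. by apply: sumr_ge0 => i _; rewrite sqr_ge0. Qed.

Lemma qq_out (R : realType) d (Lr : R) (l : seq (step d)) t : 0 <= Lr ->
  ~~ inside Lr l t -> Lr ^+ 2 <= qq R l t.
Proof.
move=> hL /forallPn [i hi]; rewrite /qq (bigD1 i) //=.
have h0 : 0 <= \sum_(j | j != i) pr R j l t ^+ 2 by apply: sumr_ge0 => j _; rewrite sqr_ge0.
set p := pr R i l t in hi *.
have : Lr ^+ 2 <= p ^+ 2.
  move: hi; rewrite negb_and -!leNgt => /orP [h|h]; nra.
lra.
Qed.

Lemma inside_rcons (R : realType) d (Lr : R) (l : seq (step d)) x t : (t <= size l)%N ->
  inside Lr (rcons l x) t = inside Lr l t.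
Proof. by move=> h; apply: eq_forallb => i; rewrite pr_rcons_le. Qed.

Lemma iotaS0 T : iota 0 T.+1 = iota 0 T ++ [:: T].
Proof. by rewrite -addn1 iotaD add0n. Qed.

Lemma has_rcons (R : realType) d (Lr : R) (l : seq (step d)) x :
  has (fun t => ~~ inside Lr (rcons l x) t) (iota 0 (size l)) =
  has (fun t => ~~ inside Lr l t) (iota 0 (size l)).
Proof.
apply: eq_in_has => t; rewrite mem_iota add0n => /andP[_ h].
by rewrite inside_rcons // ltnW.
Qed.

Lemma GG_step (R : realType) d (Lr : R) (l : seq (step d)) : (0 < d)%N -> 0 <= Lr ->
  \sum_(x : step d) stepw R x * GG Lr (size l).+1 (rcons l x) <= GG Lr (size l) l + 2^-1.
Proof.
move=> d0 hL; rewrite /GG.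
have hsum : \sum_(x : step d) stepw R x * Lr ^+ 2 = Lr ^+ 2 by rewrite -mulr_suml sum_stepw // mul1r.
under eq_bigr => x _ do rewrite iotaS0 has_cat /= orbF has_rcons inside_rcons //.
case h1: (has (fun t => ~~ inside Lr l t) (iota 0 (size l))) => /=.
  by rewrite hsum; lra.
case h2: (inside Lr l (size l)) => /=; last first.
  rewrite hsum; have := qq_out hL (negbT h2); lra.
rewrite /qq.
under eq_bigr => x _ do under eq_bigr => i _ do rewrite pr_rcons.
by rewrite step_sq.
Qed.

Lemma Ex_GG (R : realType) d (Lr : R) T : (0 < d)%N -> 0 <= Lr ->
  Ex T (@GG R d Lr T) <= T%:R * 2^-1.
Proof.
move=> d0 hL; elim: T => [|T IH].
  by rewrite /= /GG /= /qq big1 ?mul0r // => i _; rewrite pr0 expr0n.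
rewrite Ex_last.
apply: (@le_trans _ _ (Ex T (fun l => GG Lr T l + 2^-1))).
  apply: Ex_le => l hl; rewrite -hl; exact: GG_step.
rewrite ExD Ex_cst // -[T.+1%:R]natr1 mulrDl mul1r; exact: lerD IH _.
Qed.

Lemma kolmo (R : realType) d (Lr : R) T : (0 < d)%N -> 0 <= Lr ->
  Ex T (fun l : seq (step d) => (has (fun t => ~~ inside Lr l t) (iota 0 T.+1))%:R) * Lr ^+ 2 <= T%:R * 2^-1.
Proof.
move=> d0 hL; apply: le_trans (Ex_GG T d0 hL).
rewrite mulrC -ExZ; apply: Ex_le => l hl.
rewrite /GG iotaS0 has_cat /= orbF.
case h1: (has (fun t => ~~ inside Lr l t) (iota 0 T)) => /=; first by rewrite mulr1.
case h2: (inside Lr l T) => /=; last by rewrite mulr1; apply: qq_out; rewrite ?h2.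
by rewrite mulr0 qq_ge0.
Qed.

Definition XX (R : realType) d (i : 'I_d) (l : seq (step d)) : R := \sum_(x <- l) cd R i x.

Lemma XX_cons (R : realType) d (i : 'I_d) x l : XX R i (x :: l) = cd R i x + XX R i l.
Proof. by rewrite /XX big_cons. Qed.

Lemma Ex_poly (R : realType) d T (f : seq (step d) -> R) (a0 a1 a2 a3 a4 : R) : (0 < d)%N ->
  Ex T (fun l => a0 + a1 * f l + a2 * f l ^+ 2 + a3 * f l ^+ 3 + a4 * f l ^+ 4) =
  a0 + a1 * Ex T f + a2 * Ex T (fun l => f l ^+ 2) + a3 * Ex T (fun l => f l ^+ 3)
  + a4 * Ex T (fun l => f l ^+ 4).
Proof. by move=> d0; rewrite !ExD !ExZ Ex_cst. Qed.

Lemma Ex_cons_pow4 (R : realType) d (i : 'I_d) T (c : R) : (0 < d)%N ->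
  Ex T (fun l => (c + XX R i l) ^+ 4) =
  c ^+ 4 + (4 * c ^+ 3) * Ex T (XX R i) + (6 * c ^+ 2) * Ex T (fun l => XX R i l ^+ 2)
  + (4 * c) * Ex T (fun l => XX R i l ^+ 3) + 1 * Ex T (fun l => XX R i l ^+ 4).
Proof.
move=> d0; rewrite -Ex_poly //; apply: Ex_ext => l _; ring.
Qed.

Lemma Ex_cons_pow2 (R : realType) d (i : 'I_d) T (c : R) : (0 < d)%N ->
  Ex T (fun l => (c + XX R i l) ^+ 2) =
  c ^+ 2 + (2 * c) * Ex T (XX R i) + 1 * Ex T (fun l => XX R i l ^+ 2)
  + 0 * Ex T (fun l => XX R i l ^+ 3) + 0 * Ex T (fun l => XX R i l ^+ 4).
Proof.
move=> d0; rewrite -Ex_poly //; apply: Ex_ext => l _; ring.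
Qed.

Lemma Ex_cons_pow1 (R : realType) d (i : 'I_d) T (c : R) : (0 < d)%N ->
  Ex T (fun l => c + XX R i l) =
  c + 1 * Ex T (XX R i) + 0 * Ex T (fun l => XX R i l ^+ 2)
  + 0 * Ex T (fun l => XX R i l ^+ 3) + 0 * Ex T (fun l => XX R i l ^+ 4).
Proof.
move=> d0; rewrite -Ex_poly //; apply: Ex_ext => l _; ring.
Qed.

Lemma ord_gt0 d (i : 'I_d) : (0 < d)%N.
Proof. exact: leq_ltn_trans (leq0n i) (ltn_ord i). Qed.

Lemma Ex_S (R : realType) d (i : 'I_d) T (F : R -> R) :
  Ex T.+1 (fun l => F (XX R i l)) = \sum_(x : step d) stepw R x * Ex T (fun l => F (cd R i x + XX R i l)).
Proof.
rewrite /=; apply: eq_bigr => x _; congr (_ * _); apply: Ex_ext => l _; by rewrite XX_cons.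
Qed.

Lemma M1 (R : realType) d (i : 'I_d) T : Ex T (XX R i) = 0.
Proof.
have d0 := ord_gt0 i.
elim: T => [|T IH]; first by rewrite /= /XX big_nil.
rewrite (Ex_S i T (fun y => y)).
under eq_bigr => x _ do rewrite Ex_cons_pow1 // IH !mul0r mulr0 !addr0.
exact: sum_cd.
Qed.

Lemma M2 (R : realType) d (i : 'I_d) T :
  Ex T (fun l => XX R i l ^+ 2) = T%:R * ((2 * d)%:R)^-1.
Proof.
have d0 := ord_gt0 i.
elim: T => [|T IH]; first by rewrite /= /XX big_nil expr0n mul0r.
rewrite (Ex_S i T (fun y => y ^+ 2)).
under eq_bigr => x _ do rewrite Ex_cons_pow2 // M1 IH !mul0r mulr0 !addr0 mul1r mulrDr.
by rewrite big_split /= -mulr_suml sum_cd2 sum_stepw // mul1r -[T.+1%:R]natr1 mulrDl mul1r addrC.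
Qed.

Lemma cd4 (R : realType) d (i : 'I_d) x : cd R i x ^+ 4 = cd R i x ^+ 2.
Proof. by rewrite exprS cd3 -expr2. Qed.

Lemma M4 (R : realType) d (i : 'I_d) T :
  Ex T (fun l => XX R i l ^+ 4) <= T%:R * ((2 * d)%:R)^-1 + 3 * (T%:R * ((2 * d)%:R)^-1) ^+ 2.
Proof.
have d0 := ord_gt0 i.
elim: T => [|T IH]; first by rewrite /= /XX big_nil expr0n mul0r expr0n mulr0 addr0.
rewrite (Ex_S i T (fun y => y ^+ 4)).
set q := ((2 * d)%:R : R)^-1.
set E3 := Ex T (fun l => XX R i l ^+ 3).
set E4 := Ex T (fun l => XX R i l ^+ 4).
under eq_bigr => x _ do rewrite Ex_cons_pow4 // M1 M2 -/q -/E3 -/E4 mulr0 addr0 cd4.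
rewrite (eq_bigr (fun x => stepw R x * cd R i x ^+ 2 * (1 + 6 * (T%:R * q))
    + 4 * E3 * (stepw R x * cd R i x) + E4 * stepw R x)); last by move=> x _; ring.
rewrite !big_split /= -!mulr_suml -!mulr_sumr sum_cd2 -/q sum_cd sum_stepw // mulr0 addr0 mulr1.
rewrite -[T.+1%:R]natr1.
have hq : 0 <= q by rewrite /q invr_ge0 ler0n.
have hT : 0 <= (T%:R : R) by rewrite ler0n.
move: IH; rewrite -/q -/E4 => IH.
have hq2 : 0 <= q * q by rewrite mulr_ge0.
nra.
Qed.

Lemma Ex_lin3 (R : realType) d T (c k : R) (f g : seq (step d) -> R) : (0 < d)%N ->
  Ex T (fun l => c + (1 * f l + k * g l)) = c + (Ex T f + k * Ex T g).
Proof. by move=> d0; rewrite !ExD !ExZ Ex_cst // mul1r. Qed.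

Lemma Ex_sc (R : realType) d T (k : R) (f : seq (step d) -> R) :
  Ex T (fun l => k * f l) = k * Ex T f.
Proof. exact: ExZ. Qed.

Definition ind2 (R : realType) d (i : 'I_d) (Lr : R) (l : seq (step d)) : R :=
  ((- (2 * Lr) < XX R i l) && (XX R i l < 2 * Lr) : bool)%:R.

Lemma anti (R : realType) d (i : 'I_d) B (Lr : R) : 0 <= Lr ->
  16 * Lr ^+ 2 <= (B%:R : R) * ((2 * d)%:R : R)^-1 -> (1 : R) <= (B%:R : R) * ((2 * d)%:R : R)^-1 ->
  Ex B (ind2 i Lr) <= 7 / 8 :> R.
Proof.
move=> hL h16 h1.
have d0 := ord_gt0 i.
set s := B%:R * ((2 * d)%:R : R)^-1 in h16 h1.
set a := 4 * s.
have hle : Ex B (fun l => (2 * a) * XX R i l ^+ 2) <=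
    Ex B (fun l => (2 * a * (4 * Lr ^+ 2) + a ^+ 2) + (1 * XX R i l ^+ 4 + (- a ^+ 2) * ind2 i Lr l)).
  apply: Ex_le => l _; rewrite /ind2.
  have ha : 0 <= a by rewrite /a; lra.
  set X := XX R i l.
  case hX: ((- (2 * Lr) < X) && (X < 2 * Lr)) => /=.
    move/andP: hX => [h2 h3]; rewrite mulr1.
    have hZ : X ^+ 2 <= 4 * Lr ^+ 2 by nra.
    have : 0 <= X ^+ 4 by rewrite (_ : 4 = 2 * 2)%N // exprM sqr_ge0.
    nra.
  rewrite mulr0 addr0.
  have : 0 <= (X ^+ 2 - a) ^+ 2 by apply: sqr_ge0.
  have : 0 <= Lr ^+ 2 by apply: sqr_ge0.
  nra.
rewrite Ex_lin3 // Ex_sc M2 -/s in hle.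
have h4 := M4 R i B; rewrite -/s in h4.
have hs : 0 < s by lra.
set P := Ex B (ind2 i Lr) in hle *.
have : 16 * (s * s) * P <= 14 * (s * s) by rewrite /a in hle; nra.
move=> h.
have hss : 0 < s * s by nra.
nra.
Qed.

Definition UU (R : realType) d (Lr : R) (B J : nat) (l : seq (step d)) : bool :=
  all (fun j => inside Lr l (j * B)) (iota 0 J.+1).

Lemma pr_size (R : realType) d (i : 'I_d) l : pr R i l (size l) = XX R i l.
Proof. by rewrite /pr take_size. Qed.

Lemma UU_step (R : realType) d (i : 'I_d) (Lr : R) B J (l1 l2 : seq (step d)) :
  size l1 = (J * B)%N -> size l2 = B ->
  (UU Lr B J.+1 (l1 ++ l2))%:R <= (UU Lr B J l1)%:R * ind2 i Lr l2 :> R.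
Proof.
move=> h1 h2.
have hU : UU Lr B J (l1 ++ l2) = UU Lr B J l1.
  apply: eq_in_all => j; rewrite mem_iota add0n ltnS => /andP[_ hj].
  apply: eq_forallb => k; rewrite pr_catl // h1 leq_mul2r hj orbT //.
have UU_S : forall l : seq (step d), UU Lr B J.+1 l = UU Lr B J l && inside Lr l (J.+1 * B).
  by move=> l; rewrite /UU (iotaS0 J.+1) all_cat all_seq1.
rewrite UU_S hU.
case hA: (UU Lr B J l1) => /=; last by rewrite mul0r.
case hB: (inside Lr (l1 ++ l2) (J.+1 * B)) => /=; last by rewrite mul1r /ind2; case: (_ && _).
rewrite mul1r /ind2.
have hin1 : inside Lr l1 (J * B).
  by move/allP: hA => /(_ J); rewrite mem_iota add0n ltnS leqnn; apply.
move/forallP: hin1 => /(_ i) /andP[a1 a2].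
have e : (J.+1 * B = size l1 + size l2)%N by rewrite mulSnr h1 h2.
move/forallP: hB => /(_ i); rewrite e pr_catr (pr_size R i l2) h1 => /andP[b1 b2].
have -> : (- (2 * Lr) < XX R i l2) && (XX R i l2 < 2 * Lr) by apply/andP; split; lra.
by [].
Qed.

Lemma ind2_ge0 (R : realType) d (i : 'I_d) (Lr : R) l : 0 <= ind2 i Lr l.
Proof. by rewrite /ind2 ler0n. Qed.

Lemma blocks (R : realType) d (i : 'I_d) B (Lr : R) J : 0 <= Lr ->
  16 * Lr ^+ 2 <= (B%:R : R) * ((2 * d)%:R : R)^-1 -> (1 : R) <= (B%:R : R) * ((2 * d)%:R : R)^-1 ->
  Ex (J * B) (fun l : seq (step d) => (UU Lr B J l)%:R) <= (7 / 8 : R) ^+ J.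
Proof.
move=> hL h16 h1.
have d0 := ord_gt0 i.
elim: J => [|J IH]; first by rewrite /= expr0; case: (UU _ _ _ _).
rewrite mulSnr Ex_cat.
apply: (@le_trans _ _ (Ex (J * B) (fun l1 => (UU Lr B J l1)%:R * (7 / 8)))).
  apply: Ex_le => l1 hl1.
  apply: (@le_trans _ _ (Ex B (fun l2 => (UU Lr B J l1)%:R * ind2 i Lr l2))).
    by apply: Ex_le => l2 hl2; apply: UU_step.
  rewrite Ex_sc; apply: ler_wpM2l; first by rewrite ler0n.
  exact: anti.
under Ex_ext => l _ do rewrite mulrC.
by rewrite Ex_sc exprS ler_wpM2l.
Qed.

Lemma pr_take (R : realType) d (i : 'I_d) (l : seq (step d)) T0 t : (t <= T0)%N ->
  pr R i (take T0 l) t = pr R i l t.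
Proof. by move=> h; rewrite /pr take_takel. Qed.

Lemma inside_take (R : realType) d (Lr : R) (l : seq (step d)) T0 t : (t <= T0)%N ->
  inside Lr (take T0 l) t = inside Lr l t.
Proof. by move=> h; apply: eq_forallb => i; rewrite pr_take. Qed.

Lemma main_bound (R : realType) d (delta : R) (m : nat -> nat) (N b J T0 : nat) :
  (0 < d)%N ->
  (0 < nN delta N)%N -> (0 < m N * N)%N -> 0 < (N%:R : R) ^+ d -> 0 <= ln (N%:R : R) ->
  T0 = Num.truncn ((Num.sqrt (ln (ln ((nN delta N)%:R : R))))^-1 * (N%:R : R) ^+ d) ->
  (N%:R : R) ^+ d * (ln (N%:R : R) + (Num.sqrt (ln (ln ((nN delta N)%:R : R))))^-1)
     <= ((horizon d delta N * nN delta N)%N%:R : R) ->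
  ((J * (nN delta N * b))%N%:R : R) <= (N%:R : R) ^+ d * ln (N%:R : R) ->
  16 * ((m N * N)%N%:R : R) ^+ 2 <= ((nN delta N * b)%N%:R : R) * ((2 * d)%:R : R)^-1 ->
  1 <= ((nN delta N * b)%N%:R : R) * ((2 * d)%:R : R)^-1 ->
  main_prob d delta m N <= T0%:R * 2^-1 / (((m N * N)%N%:R : R) ^+ 2) + (7 / 8) ^+ J.
Proof.
move=> d0 hn hL hNd hln hT0 hK hJ h16 h1.
rewrite /main_prob /=.
set n := nN delta N in hn hT0 hK hJ h16 h1 *.
set K := horizon d delta N in hK *.
set L := (m N * N)%N in hL h16 *.
set eps := (Num.sqrt (ln (ln (n%:R : R))))^-1 in hT0 hK *.
set Nd := (N%:R : R) ^+ d in hNd hT0 hK hJ *.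
set T := (n * K.+1)%N.
set Lr := (L%:R : R).
have hLr : 0 < Lr by rewrite ltr0n.
have heps : 0 <= eps by rewrite /eps invr_ge0 sqrtr_ge0.
have hKT : ((K * n)%N <= T)%N by rewrite /T mulnC leq_mul2l ltnW ?orbT.
have hT0T : (T0 <= T)%N.
  apply: leq_trans hKT; rewrite -(ler_nat R).
  have ht : (T0%:R : R) <= eps * Nd by rewrite hT0 truncn_le; apply: mulr_ge0 => //; apply: ltW.
  apply: le_trans hK; apply: le_trans ht _.
  rewrite (mulrC eps); apply: ler_wpM2l; [exact: ltW | lra].
have hJT : ((J * (n * b)) <= T)%N.
  apply: leq_trans hKT; rewrite -(ler_nat R).
  apply: le_trans hJ _; apply: le_trans hK.
  apply: ler_wpM2l; [exact: ltW | lra].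
rewrite walk_prob_Ex.
pose low (l : seq (step d)) : R := (has (fun t => ~~ inside Lr l t) (iota 0 T0.+1))%:R.
pose high (l : seq (step d)) : R := (UU Lr (n * b) J l)%:R.
apply: (@le_trans _ _ (Ex T (fun l => low (take T0 l) + high (take (J * (n * b)) l)))).
  apply: Ex_le => l hl.
  have hib : forall t, in_box L (walk_pos (lf T l) t) = inside Lr l t.
    by move=> t; exact: in_box_pr.
  have hlow0 : 0 <= low (take T0 l) by rewrite ler0n.
  have hhigh0 : 0 <= high (take (J * (n * b)) l) by rewrite ler0n.
  rewrite /exit_time.
  set P := (fun k => ~~ in_box L (walk_pos (lf T l) (n * k))).
  set e := find P (iota 0 K.+1).
  case hA: ((e * n)%:R / Nd < eps) => /=.
    suff -> : low (take T0 l) = 1 by rewrite mulr1n; lra.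
    have hx : ((e * n)%N%:R : R) < eps * Nd by rewrite -ltr_pdivrMr.
    have hhas : has P (iota 0 K.+1).
      apply/negPn/negP => hn'; have := hasNfind hn'; rewrite size_iota -/e => he.
      move: hx; rewrite he => hx.
      have : ((K * n)%N%:R : R) <= (K.+1 * n)%N%:R by rewrite ler_nat leq_mul2r leqnSn orbT.
      have : eps * Nd <= Nd * (ln N%:R + eps) by rewrite mulrC; apply: ler_wpM2l; [exact: ltW | lra].
      lra.
    have hek : (e < K.+1)%N by rewrite -[X in (_ < X)%N](size_iota 0) -has_find.
    have := nth_find 0 hhas; rewrite -/e nth_iota // add0n /P hib => hout.
    rewrite /low; suff -> : has (fun t => ~~ inside Lr (take T0 l) t) (iota 0 T0.+1) by [].
    have hne : (n * e <= T0)%N.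
      rewrite hT0 truncn_ge_nat; last by apply: mulr_ge0 => //; apply: ltW.
      by rewrite mulnC; apply: ltW.
    apply/hasP; exists (n * e)%N; first by rewrite mem_iota add0n ltnS hne.
    by rewrite inside_take.
  case hB: (ln N%:R < (e * n)%:R / Nd) => /=; last by rewrite mulr0n; lra.
  suff -> : high (take (J * (n * b)) l) = 1 by rewrite mulr1n; lra.
  have hx : Nd * ln N%:R < ((e * n)%N%:R : R) by rewrite mulrC -ltr_pdivlMr.
  rewrite /high; suff -> : UU Lr (n * b) J (take (J * (n * b)) l) by [].
  apply/allP => j.
  rewrite mem_iota add0n ltnS => /andP[_ hj].
  rewrite inside_take; last by rewrite leq_mul2r hj orbT.
  have hjl : (j * b < e)%N.
    rewrite -(ltn_pmul2r hn) -(ltr_nat R); apply: le_lt_trans hx.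
    apply: le_trans hJ; rewrite ler_nat mulnAC mulnA leq_mul2r leq_mul2r hj !orbT //.
  have hjK : (j * b < K.+1)%N.
    by apply: leq_trans hjl _; rewrite -[X in (_ <= X)%N](size_iota 0); apply: find_size.
  have := before_find 0 hjl; rewrite nth_iota // add0n /P hib => /negbFE.
  by rewrite mulnCA.
rewrite ExD (@Ex_marg R d T T0 (fun l => low (take T0 l)) low d0 hT0T (fun l _ => erefl)).
rewrite (@Ex_marg R d T (J * (n * b)) (fun l => high (take (J * (n * b)) l)) high d0 hJT (fun l _ => erefl)).
apply: lerD.
  have := kolmo (R := R) (d := d) T0 d0 (ltW hLr).
  move=> hk.
  by rewrite ler_pdivlMr ?exprn_gt0.
exact: (@blocks R d (Ordinal d0) (n * b) Lr J (ltW hLr)).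
Qed.

Local Open Scope classical_set_scope.

Lemma cvg0_from (R : realType) (u : nat -> R) :
  (forall e, 0 < e -> exists N0, forall N, (N0 <= N)%N -> `|u N| < e) -> u @ \oo --> 0.
Proof.
move=> h; apply/cvgrPdist_lt => e e0.
have [N0 hN0] := h e e0.
exists N0 => // N /= hN; rewrite sub0r normrN; exact: hN0.
Qed.

Lemma ev_lt (R : realType) (u : nat -> R) (A e : R) : 0 < e -> u @ \oo --> A ->
  exists N0, forall N, (N0 <= N)%N -> `|A - u N| < e.
Proof.
move=> e0 /cvgrPdist_lt /(_ e e0) [N0 _ hN0].
exists N0 => N hN; exact: hN0.
Qed.

Lemma ln_ge_exp (R : realType) (y x : R) : expR y <= x -> y <= ln x.
Proof.
move=> h; have hx : 0 < x by apply: lt_le_trans h; apply: expR_gt0.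
rewrite -{1}(expRK y) ler_ln // posrE ?expR_gt0 //.
Qed.

Lemma lnln_ge (R : realType) (M x : R) : expR (expR M) <= x -> M <= ln (ln x).
Proof.
move=> h; apply: ln_ge_exp; exact: ln_ge_exp.
Qed.

Lemma main_prob_ge0 (R : realType) d (delta : R) m N : (0 < d)%N -> 0 <= main_prob d delta m N.
Proof.
move=> d0; rewrite /main_prob /= walk_prob_Ex.
rewrite -(@Ex_cst R d (nN delta N * (horizon d delta N).+1) 0 d0).
by apply: Ex_le => l _; rewrite ler0n.
Qed.


Local Open Scope classical_set_scope.
Lemma aux1 (R : realType) (j nb C Nd l : R) : 0 <= j -> 0 < Nd -> nb <= C * Nd ->
  C * j + 1 <= l -> j * nb <= Nd * l.
Proof.
move=> hj hNd h1 h2.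
have : j * nb <= j * (C * Nd) by apply: ler_wpM2l.
have : Nd * (C * j + 1) <= Nd * l by apply: ler_wpM2l => //; exact: ltW.
nra.
Qed.

Lemma aux2 (R : realType) (t eps Nd e A L2 : R) : 0 < e -> 0 < A -> 0 < Nd -> 0 <= eps ->
  t <= eps * Nd -> eps <= e * A / 4 -> A / 2 * Nd < L2 -> t * 2^-1 <= e / 4 * L2.
Proof.
move=> he hA hNd heps h1 h2 h3.
have : eps * Nd <= e * A / 4 * Nd by apply: ler_wpM2r => //; exact: ltW.
have : e / 4 * (A / 2 * Nd) <= e / 4 * L2 by apply: ler_wpM2l; [lra|exact: ltW].
lra.
Qed.

Lemma aux3 (R : realType) (x y e : R) : x <= e / 4 -> y < e / 2 -> 0 < e -> x + y < e.
Proof. lra. Qed.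

Lemma per_N (R : realType) d (delta : R) (m : nat -> nat) (N J0 : nat) (A e : R) :
  (0 < d)%N -> 0 < A -> 0 < e -> 1 <= delta -> delta <= d%:R ->
  (0 < N)%N ->
  expR (expR ((4 / (e * A)) ^+ 2)) <= N%:R ->
  expR ((48 * d%:R * A + 1) * J0%:R + 1) <= N%:R ->
  `|A - ((m N * N)%N%:R : R) ^+ 2 / (N%:R : R) ^+ d| < A / 2 ->
  (forall J, (J0 <= J)%N -> (7 / 8 : R) ^+ J < e / 2) ->
  `|main_prob d delta m N| < e.
Proof.
move=> d0 hA he hdel1 hdeld hN0 hNr hNl hLA hJ0.
have hN1 : (1 : R) <= N%:R by rewrite ler1n.
set n := nN delta N.
set L := (m N * N)%N in hLA *.
set Nd := (N%:R : R) ^+ d in hLA *.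
have hNd1 : 1 <= Nd by apply: exprn_ege1.
have hNd : 0 < Nd by apply: lt_le_trans hNd1; apply: ltr01.
have hnN : (N <= n)%N.
  rewrite /n /nN truncn_ge_nat ?powR_ge0 //; exact: le1r_powR.
have hnd : (n%:R : R) <= Nd.
  have ht : (n%:R : R) <= (N%:R : R) `^ delta by rewrite /n /nN truncn_le powR_ge0.
  apply: le_trans ht _.
  rewrite /Nd -powR_mulrn ?(le_trans ler01 hN1) //; exact: ler_powR.
have hn : (0 < n)%N by apply: leq_trans hnN.
have hnr : (0 : R) < n%:R by rewrite ltr0n.
have hln : 0 <= ln (N%:R : R) by apply: ln_ge0.
have [hLlo hLhi] : A / 2 * Nd < (L%:R : R) ^+ 2 /\ (L%:R : R) ^+ 2 < 3 * A / 2 * Nd.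
  move: hLA; rewrite ltr_norml => /andP[h1 h2].
  split; first by rewrite -ltr_pdivlMr //; lra.
  by rewrite -ltr_pdivrMr //; lra.
have hL : (0 < L)%N.
  rewrite lt0n; apply/negP => /eqP hL0; move: hLlo; rewrite hL0 expr0n /=.
  have : 0 < A / 2 * Nd by apply: mulr_gt0 => //; lra.
  lra.
have hL1 : (1 : R) <= L%:R ^+ 2 by apply: exprn_ege1; rewrite ler1n.
set C := 48 * d%:R * A + 1.
set b := (Num.truncn (32 * d%:R * (L%:R : R) ^+ 2 / n%:R)).+1.
have hdr : (0 : R) < d%:R by rewrite ltr0n.
have hb1 : 32 * d%:R * (L%:R : R) ^+ 2 < (n * b)%N%:R.
  rewrite natrM [X in _ < X]mulrC -ltr_pdivrMr //; exact: truncnS_gt.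
have hb2 : ((n * b)%N%:R : R) <= C * Nd.
  have hb : (b%:R : R) <= 32 * d%:R * (L%:R : R) ^+ 2 / n%:R + 1.
    rewrite /b -natr1 lerD2r truncn_le; apply: divr_ge0; last exact: ltW.
    by apply: mulr_ge0; [apply: mulr_ge0; [lra|exact: ltW]|apply: sqr_ge0].
  rewrite natrM.
  have : (n%:R : R) * b%:R <= 32 * d%:R * (L%:R : R) ^+ 2 + n%:R.
    move: hb; rewrite -(ler_pM2l hnr) mulrDr mulr1 mulrCA divff ?mulr1 //; exact: lt0r_neq0.
  have hdL : d%:R * (L%:R : R) ^+ 2 <= d%:R * (3 * A / 2 * Nd) by apply: ler_wpM2l; [exact: ltW|exact: ltW].
  rewrite /C; lra.
have hnb : (0 : R) < (n * b)%N%:R by rewrite ltr0n muln_gt0 hn.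
set eps := (Num.sqrt (ln (ln (n%:R : R))))^-1.
have heps0 : 0 <= eps by rewrite /eps invr_ge0 sqrtr_ge0.
have heps : eps <= e * A / 4.
  have hX : (4 / (e * A)) ^+ 2 <= ln (ln (n%:R : R)).
    by apply: lnln_ge; apply: le_trans hNr _; rewrite ler_nat.
  have heA : 0 < 4 / (e * A) by apply: divr_gt0; [lra|apply: mulr_gt0].
  have hs : 4 / (e * A) <= Num.sqrt (ln (ln (n%:R : R))).
    by rewrite -(ger0_norm (ltW heA)) -sqrtr_sqr ler_sqrt // (le_trans _ hX) // sqr_ge0.
  rewrite /eps -[e * A / 4]invf_div lef_pV2 // posrE //; exact: lt_le_trans hs.
set T0 := Num.truncn (eps * Nd).
set J := Num.truncn (Nd * ln (N%:R : R) / (n * b)%N%:R).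
set K := horizon d delta N.
have hK : Nd * (ln (N%:R : R) + eps) <= ((K * n)%N%:R : R).
  rewrite natrM -ler_pdivrMr //; apply: ltW; exact: truncnS_gt.
have hJ : ((J * (n * b))%N%:R : R) <= Nd * ln (N%:R : R).
  rewrite natrM -ler_pdivlMr // truncn_le; apply: divr_ge0; [apply: mulr_ge0 => //; exact: ltW|exact: ltW].
have h16 : 16 * ((m N * N)%N%:R : R) ^+ 2 <= ((n * b)%N%:R : R) * ((2 * d)%:R : R)^-1.
  rewrite ler_pdivlMr ?ltr0n ?muln_gt0 // -/L (natrM _ 2 d).
  apply: ltW; apply: le_lt_trans hb1; rewrite le_eqVlt; apply/orP; left; apply/eqP; ring.
have h1 : 1 <= ((n * b)%N%:R : R) * ((2 * d)%:R : R)^-1 by move: h16; rewrite -/L; lra.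
have hmain := @main_bound R d delta m N b J T0 d0 hn hL hNd hln erefl hK hJ h16 h1.
have hge0 := @main_prob_ge0 R d delta m N d0.
rewrite ger0_norm //.
apply: le_lt_trans hmain _.
have hT0 : (T0%:R : R) <= eps * Nd by rewrite /T0 truncn_le; apply: mulr_ge0 => //; exact: ltW.
have hJJ0 : (J0 <= J)%N.
  rewrite /J truncn_ge_nat; last by apply: divr_ge0; [apply: mulr_ge0 => //; exact: ltW|exact: ltW].
  rewrite ler_pdivlMr //.
  have hlnN : C * J0%:R + 1 <= ln (N%:R : R) by apply: ln_ge_exp.
  have hJ0r : (0 : R) <= J0%:R by rewrite ler0n.
  exact: (aux1 hJ0r hNd hb2 hlnN).
have h7 := hJ0 J hJJ0.
have hL2 : 0 < (L%:R : R) ^+ 2 by apply: lt_le_trans hL1; exact: ltr01.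
have h8 : T0%:R * 2^-1 / (L%:R : R) ^+ 2 <= e / 4.
  rewrite ler_pdivrMr //; exact: (aux2 he hA hNd heps0 hT0 heps hLlo).
exact: aux3 h8 h7 he.
Qed.

Unset Implicit Arguments.

Theorem mainTheorem4 (R : realType) (d : nat) (hd : (3 <= d)%N)
  (m : nat -> nat) (A : R) (hA : 0 < A)
  (hL : (fun N : nat => ((m N * N)%:R : R) ^+ 2 / (N%:R : R) ^+ d) @ \oo --> A)
  (delta : R) (hdelta2 : 2 < delta) (hdeltad : delta < d%:R) :
  (fun N : nat => main_prob d delta m N) @ \oo --> (0 : R).
Proof.
have d0 : (0 < d)%N by apply: leq_trans hd.
apply: cvg0_from => e e0.
have hA2 : 0 < A / 2 by apply: divr_gt0.
have [N1 hN1] := ev_lt hA2 hL.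
have he2 : 0 < e / 2 by apply: divr_gt0.
have [J0 hJ0] : exists J0, forall J, (J0 <= J)%N -> (7 / 8 : R) ^+ J < e / 2.
  have h78 : `|7 / 8 : R| < 1 by rewrite ger0_norm; lra.
  have [J0 hJ] := ev_lt he2 (cvg_expr h78).
  exists J0 => J hJ'; have := hJ J hJ'; rewrite sub0r normrN => h.
  exact: le_lt_trans (ler_norm _) h.
set r := Num.max (expR (expR ((4 / (e * A)) ^+ 2))) (expR ((48 * d%:R * A + 1) * J0%:R + 1)).
exists (maxn (maxn N1 1) (Num.truncn r).+1) => N hN.
have hNr : r <= N%:R.
  apply: ltW; apply: lt_le_trans (truncnS_gt r) _.
  by rewrite ler_nat (leq_trans _ hN) // leq_maxr.
apply: (@per_N R d delta m N J0 A e) => //.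
- have h12 : (1 : R) < 2 by lra.
  by apply: ltW; apply: lt_trans h12 hdelta2.
- exact: ltW.
- by apply: leq_trans hN; rewrite (leq_trans _ (leq_maxl _ _)) // leq_maxr.
- by apply: le_trans hNr; rewrite le_max lexx.
- by apply: le_trans hNr; rewrite le_max lexx orbT.
- by apply: hN1; rewrite (leq_trans _ hN) // (leq_trans _ (leq_maxl _ _)) // leq_maxl.
Qed.
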